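(* Let $\mathbf C=(\mathbf C_\tau,q_n^{\mathbf C},\mathsf e_i^{\mathbf C})$ be a minimal clone $\tau$-algebra, let $\mathrm{Var}(\mathbf C_\tau)$ be the variety of $\tau$-algebras generated by $\mathbf C_\tau$ and $\mathrm{Var}(\mathbf C)$ the variety of clone $\tau$-algebras generated by $\mathbf C$. Then: (i) $\mathbf C_\tau$ is the free algebra over a countable set of generators (namely $\{\mathsf e_1^{\mathbf C},\mathsf e_2^{\mathbf C},\dots\}$) in $\mathrm{Var}(\mathbf C_\tau)$; (ii) $\mathbf C$ is the clone $\mathrm{Var}(\mathbf C_\tau)$-algebra; (iii) $\mathbf C$ is the free algebra over an empty set of generators in $\mathrm{Var}(\mathbf C)$.
   Context: A clone $\tau$-algebra is an algebra $\mathbf C=(C,\sigma^{\mathbf C}\ (\sigma\in\tau),q_n^{\mathbf C}\ (n\ge0),\mathsf e_i^{\mathbf C}\ (i\ge1))$ with $\mathsf e_i$ nullary, $q_n$ of arity $n+1$, satisfying: (C1) $q_n(\mathsf e_i,x_1,\dots,x_n)=x_i$ ($1\le i\le n$); (C2) $q_n(\mathsf e_j,x_1,\dots,x_n)=\mathsf e_j$ ($j>n$); (C3) $q_n(x,\mathsf e_1,\dots,\mathsf e_n)=x$; (C4) $q_k(x,y_1,\dots,y_k)=q_n(x,y_1,\dots,y_k,\mathsf e_{k+1},\dots,\mathsf e_n)$ ($n>k$); (C5) $q_n(q_n(x,\mathbf y),\mathbf z)=q_n(x,q_n(y_1,\mathbf z),\dots,q_n(y_n,\mathbf z))$; (C6)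 $q_n(\sigma(x_1,\dots,x_k),\mathbf y)=\sigma(q_n(x_1,\mathbf y),\dots,q_n(x_k,\mathbf y))$ for $\sigma\in\tau$ of arity $k$. $\mathbf C_\tau=(C,\sigma^{\mathbf C})_{\sigma\in\tau}$ is the $\tau$-reduct. $\mathbf C$ is minimal if $C$ equals the smallest subset of $C$ containing all $\mathsf e_i^{\mathbf C}$ and closed under the operations $\sigma^{\mathbf C}$ ($\sigma\in\tau$). For a variety $\mathcal V$ of $\tau$-algebras with free algebra $\mathbf F_{\mathcal V}$ over $\{v_1,v_2,\dots\}$, the clone $\mathcal V$-algebra is $(\mathbf F_{\mathcal V},q_n^{\mathbf F},\mathsf e_i^{\mathbf F})$ with $\mathsf e_i^{\mathbf F}=v_i$ and $q_n^{\mathbf F}(a,b_1,\dots,b_n)=s(a)$, $s$ the unique endomorphism with $s(v_i)=b_i$ ($i\le n$) and $s(v_i)=v_i$ ($i>n$). In (ii), the identification is via the free generators $\mathsf e_i^{\mathbf C}$ playing the role of $v_i$. *)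

(* Defs.v *)
From mathcomp Require Import all_boot.
Set Implicit Arguments. Unset Strict Implicit. Unset Printing Implicit Defensive.

Record signature := Signature { sym :> Type; arity : sym -> nat }.

Record algebra (S : signature) := Algebra {
  carrier :> Type;
  op : forall s : S, ('I_(arity s) -> carrier) -> carrier }.
Arguments op {S} a s _.
Arguments Algebra {S} carrier op.

Inductive term (S : signature) : Type :=
| Var : nat -> term S
| App : forall s : S, ('I_(arity s) -> term S) -> term S.

Fixpoint eval (S : signature) (A : algebra S) (v : nat -> A) (t : term S) : A :=
  match t with
  | Var x => v x
  | App s ts => op A s (fun i => @eval S A v (ts i))
  end.
Arguments eval {S} A v t.

Definition satisfies (S : signature) (A : algebra S) (t1 t2 : term S) : Prop :=
  forall v : nat -> A, eval A v t1 = eval A v t2.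
Arguments satisfies {S} A t1 t2.

(* Var A : the variety generated by A, i.e. the class of all S-algebras
   satisfying every identity valid in A (Birkhoff: = HSP(A)). *)
Definition in_var (S : signature) (A B : algebra S) : Prop :=
  forall t1 t2 : term S, satisfies A t1 t2 -> satisfies B t1 t2.
Arguments in_var {S} A B.

Definition is_hom (S : signature) (A B : algebra S) (f : A -> B) : Prop :=
  forall (s : S) (args : 'I_(arity s) -> A), f (op A s args) = op B s (fun i => f (args i)).
Arguments is_hom {S} A B f.

Inductive generated (S : signature) (A : algebra S) (X : A -> Prop) : A -> Prop :=
| gen_base : forall x, X x -> @generated S A X x
| gen_op : forall (s : S) (args : 'I_(arity s) -> A),
    (forall i, @generated S A X (args i)) -> @generated S A X (op A s args).
Arguments generated {S} A X _.

Definition free_over (S : signature) (V : algebra S -> Prop) (F : algebra S)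
    (X : Type) (g : X -> F) : Prop :=
  [/\ V F,
      (forall y : F, generated F (fun z => exists x, g x = z) y)
    & forall B : algebra S, V B -> forall h : X -> B,
        (exists f : F -> B, is_hom F B f /\ forall x, f (g x) = h x) /\
        (forall f1 f2 : F -> B, is_hom F B f1 -> is_hom F B f2 ->
           (forall x, f1 (g x) = h x) -> (forall x, f2 (g x) = h x) ->
           forall y, f1 y = f2 y)].
Arguments free_over {S} V F {X} g.

(* Signature of clone tau-algebras: tau, plus q_n (arity n+1), plus nullary e_i.
   CONVENTION: CE i stands for e_(i+1) (i : nat), so e_1, e_2, ... are CE 0, CE 1, ... *)
Inductive clone_sym (tau : signature) : Type :=
| CTau : tau -> clone_sym tau
| CQ : nat -> clone_sym tau
| CE : nat -> clone_sym tau.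

Definition clone_arity (tau : signature) (c : clone_sym tau) : nat :=
  match c with CTau s => arity s | CQ n => n.+1 | CE _ => 0 end.

Definition clone_sig (tau : signature) : signature :=
  Signature (@clone_arity tau).

Definition ord0_elim (T : Type) (k : 'I_0) : T.
Proof. by case: k. Defined.

Definition eop (tau : signature) (C : algebra (clone_sig tau)) (i : nat) : C :=
  op C (CE tau i) (@ord0_elim C).
Arguments eop {tau} C i.

(* q_n(x, y_1, ..., y_n) where ys j = y_(j+1) (only j < n matters) *)
Definition qop (tau : signature) (C : algebra (clone_sig tau)) (n : nat) (x : C)
    (ys : nat -> C) : C :=
  op C (CQ tau n) (fun k : 'I_n.+1 => if val k is j.+1 then ys j else x).
Arguments qop {tau} C n x ys.

Definition tauop (tau : signature) (C : algebra (clone_sig tau)) (s : tau)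
    (args : 'I_(arity s) -> C) : C := op C (CTau s) args.
Arguments tauop {tau} C s args.

Definition is_clone_algebra (tau : signature) (C : algebra (clone_sig tau)) : Prop :=
  (forall n ys i, i < n -> qop C n (eop C i) ys = ys i) /\
  (forall n ys j, n <= j -> qop C n (eop C j) ys = eop C j) /\
  (forall n x, qop C n x (eop C) = x) /\
  (forall k n x ys, k < n ->
              qop C k x ys = qop C n x (fun j => if j < k then ys j else eop C j)) /\
  (forall n x ys zs,
              qop C n (qop C n x ys) zs = qop C n x (fun j => qop C n (ys j) zs)) /\
  (forall n (s : tau) args ys,
              qop C n (tauop C s args) ys = tauop C s (fun i => qop C n (args i) ys)).

Arguments is_clone_algebra {tau} C.

Definition reduct (tau : signature) (C : algebra (clone_sig tau)) : algebra tau :=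
  @Algebra tau (carrier C) (fun (s : tau) (args : 'I_(arity s) -> C) => tauop C s args).
Arguments reduct {tau} C.

Definition minimal (tau : signature) (C : algebra (clone_sig tau)) : Prop :=
  forall x : C, generated (reduct C) (fun y => exists i, eop C i = y) x.
Arguments minimal {tau} C.

(* Main.v *)
Require Import Defs.
From mathcomp Require Import all_boot.
From Stdlib Require Import IndefiniteDescription FunctionalExtensionality.

Fixpoint tbound (S : signature) (t : term S) : nat :=
  match t with Var x => x.+1 | App s ts => \max_(i < arity s) tbound S (ts i) end.

Arguments tbound {S} t.

Lemma gen_term (S : signature) (A : algebra S) (g : nat -> A) a :
  generated A (fun z => exists i, g i = z) a -> exists t, eval A g t = a.
Proof.
elim => [x [i <-]| s args _ IH]; first by exists (Var S i).
pose ts i := proj1_sig (constructive_indefinite_description _ (IH i)).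
exists (App ts) => /=. congr (op A s). apply: functional_extensionality => i.
by rewrite /ts; case: (constructive_indefinite_description _ _).
Qed.

Lemma subst_lem (tau : signature) (C : algebra (clone_sig tau)) :
  is_clone_algebra C -> forall t m, tbound t <= m -> forall v,
  eval (reduct C) v t = qop C m (eval (reduct C) (eop C) t) v.
Proof.
move=> [C1 [C2 [C3 [C4 [C5 C6]]]]].
elim => [x|s ts IH] m /= Hm v; first by rewrite C1.
change (tauop C s (fun i => eval (reduct C) v (ts i)) = qop C m (tauop C s (fun i => eval (reduct C) (eop C) (ts i))) v).
rewrite C6 /=. rewrite /tauop. congr (op C (CTau s)).
apply: functional_extensionality => i. apply: IH.
apply: leq_trans Hm. exact: leq_bigmax.
Qed.

Lemma gen_ind_uniq (S : signature) (A B : algebra S) X (f1 f2 : A -> B) :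
  is_hom A B f1 -> is_hom A B f2 -> (forall x, X x -> f1 x = f2 x) ->
  forall y, generated A X y -> f1 y = f2 y.
Proof.
move=> H1 H2 HX y; elim => [x /HX //|s args _ IH].
rewrite H1 H2; congr (op B s); exact: functional_extensionality.
Qed.

Theorem theorem11p8 (tau : signature) (C : algebra (clone_sig tau)) :
  is_clone_algebra C -> minimal C ->
  (* (i) C_tau is free in Var(C_tau) over e_1, e_2, ... *)
  free_over (in_var (reduct C)) (reduct C) (fun i : nat => eop C i)
  (* (ii) C is the clone Var(C_tau)-algebra (with e_i in the role of v_i):
     q_n(a, b_1..b_n) = s(a), s the endomorphism with s(e_i)=b_i (i<=n), s(e_i)=e_i (i>n) *)
  /\ (forall (n : nat) (a : C) (b : nat -> C) (s : C -> C),
        is_hom (reduct C) (reduct C) s ->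
        (forall j, j < n -> s (eop C j) = b j) ->
        (forall j, n <= j -> s (eop C j) = eop C j) ->
        qop C n a b = s a)
  (* (iii) C is free over the empty set in Var(C) *)
  /\ free_over (in_var C) C (fun e : Empty_set => match e with end).
Proof.
move=> HC Hmin.
have HC' := HC. move: HC' => [C1 [C2 [C3 [C4 [C5 C6]]]]].
split; last split.
-
  split; [by [] | exact: Hmin |].
  move=> B HB h.
  have wd : forall t1 t2, eval (reduct C) (eop C) t1 = eval (reduct C) (eop C) t2 ->
      eval B h t1 = eval B h t2.
    move=> t1 t2 E; apply: HB => v.
    rewrite (@subst_lem _ _ HC t1 (maxn (tbound t1) (tbound t2))) ?leq_maxl //.
    rewrite (@subst_lem _ _ HC t2 (maxn (tbound t1) (tbound t2))) ?leq_maxr //.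
    by rewrite E.
  have ex : forall a : C, exists t, eval (reduct C) (eop C) t = a.
    move=> a; apply: gen_term; exact: Hmin.
  pose pick a := proj1_sig (constructive_indefinite_description _ (ex a)).
  have pickP : forall a, eval (reduct C) (eop C) (pick a) = a.
    by move=> a; rewrite /pick; case: (constructive_indefinite_description _ _).
  split.
  + exists (fun a => eval B h (pick a)); split.
    * move=> s args.
      have -> : op B s (fun i => eval B h (pick (args i))) = eval B h (App (fun i => pick (args i))) by [].
      apply: wd; rewrite pickP /=. congr (tauop C s).
      apply: functional_extensionality => i; by rewrite pickP.
    * move=> x. have -> : h x = eval B h (Var tau x) by [].
      apply: wd; by rewrite pickP.
  + move=> f1 f2 H1 H2 E1 E2 y.
    move: (Hmin y); apply: (@gen_ind_uniq _ _ _ _ _ _ H1 H2).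
    by move=> _ [i <-]; rewrite E1 E2.
-
  move=> n a b s Hs Hlt Hge.
  elim: (Hmin a) => [x [i <-]|sg args _ IH].
  + case: (ltnP i n) => Hi; first by rewrite C1 // Hlt.
    by rewrite C2 // Hge.
  + rewrite Hs.
    have -> : op (reduct C) sg args = tauop C sg args by [].
    rewrite C6; rewrite /tauop /=; congr (op C (CTau sg)).
    exact: functional_extensionality.
-
  have genC : forall y : C, generated C (fun z => exists x : Empty_set, match x with end = z) y.
    move=> y; elim: (Hmin y) => [x [i <-]|sg args _ IH].
    + apply: (@gen_op _ C _ (CE tau i) (@ord0_elim C)); by case.
    + exact: (@gen_op _ C _ (CTau sg) args).
  split; [by [] | exact: genC |].
  move=> B HB h.
  have e0 : B := op B (CE tau 0) (@ord0_elim B).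
  have ex : forall a : C, exists t, forall v, eval C v t = a.
    move=> a; elim: (genC a) => [x [[]]|sg args _ IH].
    pose ts i := proj1_sig (constructive_indefinite_description _ (IH i)).
    exists (App ts) => v /=. congr (op C sg). apply: functional_extensionality => i.
    by rewrite /ts; case: (constructive_indefinite_description _ _).
  pose pick a := proj1_sig (constructive_indefinite_description _ (ex a)).
  have pickP : forall a v, eval C v (pick a) = a.
    by move=> a; rewrite /pick; case: (constructive_indefinite_description _ _).
  split.
  + exists (fun a => eval B (fun _ => e0) (pick a)); split; last by case.
    move=> s args.
    have -> : op B s (fun i => eval B (fun _ => e0) (pick (args i)))
       = eval B (fun _ => e0) (App (fun i => pick (args i))) by [].
    apply: HB => v. rewrite pickP /=. congr (op _ s).
    apply: functional_extensionality => i; by rewrite pickP.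
  + move=> f1 f2 H1 H2 _ _ y.
    move: (genC y); apply: (@gen_ind_uniq _ _ _ _ _ _ H1 H2); by move=> _ [[]].
Qed.
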